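(* Let $(\mathtt{g},\sigma)$ be a magnetic system on a closed manifold $M$, let $s>0$ and $\Sigma_s=\{v\in TM:\|v\|=s\}$. Then for every $v\in\Sigma_s$ and all $\xi,\eta\in T_v\Sigma_s$, \[ \omega^\sigma(\xi,\eta)=\langle[\pi_*\xi]^\perp,K^\sigma(\eta)\rangle-\langle K^\sigma(\xi),[\pi_*\eta]^\perp\rangle . \] In particular, the restriction of $\omega^\sigma$ to $T_v\Sigma_s$ is degenerate, and its kernel is the line $\mathbb{R}X^{\mathtt{g},\sigma}_v$.
   Context: A magnetic system is a pair $(\mathtt{g},\sigma)$, $\mathtt{g}=\langle\cdot,\cdot\rangle$ a Riemannian metric, $\sigma$ a closed $2$-form; the Lorentz force $\Omega$ is the skew-adjoint endomorphism of $TM$ with $\sigma(v,w)=\langle v,\Omega(w)\rangle$. $\pi:TM\to M$ is the projection and $K:T(TM)\to TM$ is the Levi-Civita connector: if $Z(t)$ is a curve in $TM$ with $Z(0)=v$ and $\dot Z(0)=\xi$, then $K(\xi)=\frac{{\rm D}Z}{{\rm d}t}(0)$, the Levi-Civita covariant derivative of $Z$ along $\pi\circ Z$. The twisted symplectic form on $TM$ is $\omega^\sigma(\xi,\eta)=\langle\pi_*\xi,K(\eta)\rangle-\langle K(\xi),\pi_*\eta\rangle-\sigma(\pi_*\xi,\pi_*\eta)$. For a unit vector $u$ and $w\in T_{\pi(u)}M$ let $\widetilde\Omega_u(w)=\frac12\big(\langle\Omega(w),u\rangle u+\langle w,u\rangle\Omega(u)+\Omega(w)\big)$. For $\xi\in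 T_v(TM)$ with $v\in\Sigma_s$, the twisted connector is $K^\sigma(\xi)=K(\xi)-\widetilde\Omega_{v/s}(\pi_*\xi)$. For $v\in\Sigma_s$, $[\cdot]^\perp$ denotes orthogonal projection of $T_{\pi(v)}M$ onto $v^\perp$. $X^{\mathtt{g},\sigma}$ is the generator of the magnetic flow on $TM$, i.e. the vector field whose integral curves are $t\mapsto\dot\gamma(t)$ for curves $\gamma$ satisfying $\frac{{\rm D}\dot\gamma}{{\rm d}t}=\Omega(\dot\gamma)$; it is tangent to $\Sigma_s$. *)

(* Defs.v *)
(* Pointwise (linear-algebraic) model of the magnetic
   setting at a single vector v in T_x M. *)
From HB Require Import structures.
From mathcomp Require Import all_boot all_order all_algebra.
Set Implicit Arguments. Unset Strict Implicit. Unset Printing Implicit Defensive.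
Import Order.TTheory GRing.Theory Num.Theory.
Local Open Scope ring_scope.

Section Magnetic.
Variables (R : realFieldType) (n : nat).

(* Riemannian inner product on T_xM = 'rV_n given by the Gram matrix G. *)
Definition ip (G : 'M[R]_n) (a b : 'rV[R]_n) : R := (a *m G *m b^T) 0 0.

(* bilinear form with matrix S (the 2-form sigma at x) *)
Definition bil (S : 'M[R]_n) (a b : 'rV[R]_n) : R := (a *m S *m b^T) 0 0.

Definition lorentz (Om : 'M[R]_n) (w : 'rV[R]_n) : 'rV[R]_n := w *m Om.

Definition Omtilde (G Om : 'M[R]_n) (u w : 'rV[R]_n) : 'rV[R]_n :=
  2^-1 *: (ip G (lorentz Om w) u *: u + ip G w u *: lorentz Om u + lorentz Om w).

Definition perp (G : 'M[R]_n) (v w : 'rV[R]_n) : 'rV[R]_n :=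
  w - (ip G w v / ip G v v) *: v.

Variable (W : lmodType R). (* the tangent space T_v(TM) *)

Definition omega_sig (G S : 'M[R]_n) (pi K : W -> 'rV[R]_n) (xi eta : W) : R :=
  ip G (pi xi) (K eta) - ip G (K xi) (pi eta) - bil S (pi xi) (pi eta).

Definition Ksig (G Om : 'M[R]_n) (pi K : W -> 'rV[R]_n) (s : R) (v : 'rV[R]_n)
  (xi : W) : 'rV[R]_n :=
  K xi - Omtilde G Om (s^-1 *: v) (pi xi).

End Magnetic.

(* Main.v *)
Require Import Defs.
From HB Require Import structures.
From mathcomp Require Import all_boot all_order all_algebra.
From mathcomp Require Import ring lra.
Import Order.TTheory GRing.Theory Num.Theory.
Local Open Scope ring_scope.
Section L.
Variables (R : realFieldType) (n : nat) (G : 'M[R]_n).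
Lemma ipDl a b c : ip G (a + b) c = ip G a c + ip G b c.
Proof. by rewrite /ip !mulmxDl mxE. Qed.
Lemma ipZl k a c : ip G (k *: a) c = k * ip G a c.
Proof. by rewrite /ip -!scalemxAl mxE. Qed.
Lemma ipNl a c : ip G (- a) c = - ip G a c.
Proof. by rewrite -scaleN1r ipZl mulN1r. Qed.
Lemma ipDr a b c : ip G c (a + b) = ip G c a + ip G c b.
Proof. by rewrite /ip linearD /= mulmxDr mxE. Qed.
Lemma ipZr k a c : ip G c (k *: a) = k * ip G c a.
Proof. by rewrite /ip linearZ /= -scalemxAr mxE. Qed.
Lemma ipNr a c : ip G c (- a) = - ip G c a.
Proof. by rewrite -scaleN1r ipZr mulN1r. Qed.
Lemma ipC (hG : G^T = G) a b : ip G a b = ip G b a.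
Proof.
rewrite /ip; have -> : a *m G *m b^T = (b *m G *m a^T)^T.
  by rewrite !trmx_mul trmxK hG mulmxA.
by rewrite mxE.
Qed.
Lemma lorD (Om : 'M[R]_n) a b : lorentz Om (a + b) = lorentz Om a + lorentz Om b.
Proof. by rewrite /lorentz mulmxDl. Qed.
Lemma lorZ (Om : 'M[R]_n) k a : lorentz Om (k *: a) = k *: lorentz Om a.
Proof. by rewrite /lorentz scalemxAl. Qed.
Lemma lorN (Om : 'M[R]_n) a : lorentz Om (- a) = - lorentz Om a.
Proof. by rewrite /lorentz mulNmx. Qed.
Lemma ipskew (hG : G^T = G) {S Om : 'M[R]_n} (hS : S^T = - S)
  (hb : forall a b, bil S a b = ip G a (lorentz Om b)) a b :
  ip G a (lorentz Om b) = - ip G (lorentz Om a) b.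
Proof.
rewrite -hb (ipC hG) -hb /bil.
have -> : b *m S *m a^T = - (a *m S *m b^T)^T.
  by rewrite !trmx_mul trmxK hS !mulmxA mulmxN mulNmx opprK.
by rewrite !mxE opprK.
Qed.
Lemma ipself (hG : G^T = G) {S Om : 'M[R]_n} (hS : S^T = - S)
  (hb : forall a b, bil S a b = ip G a (lorentz Om b)) a :
  ip G (lorentz Om a) a = 0.
Proof.
have h := ipskew hG hS hb a a. rewrite (ipC hG) in h.
have : 2 * ip G (lorentz Om a) a = 0 by rewrite mulr2n mulrDl mul1r {1}h addNr.
by move/eqP; rewrite mulf_eq0 pnatr_eq0 /= => /eqP.
Qed.
End L.
Arguments ipC {R n G}.
Arguments ipskew {R n G} hG {S Om}.
Arguments ipself {R n G} hG {S Om}.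
Lemma part1 (R : realFieldType) (n : nat) (G S Om : 'M[R]_n)
  (s : R) (v a b ka kb : 'rV[R]_n) :
  G^T = G -> S^T = - S ->
  (forall a b : 'rV[R]_n, bil S a b = ip G a (lorentz Om b)) ->
  0 < s -> ip G v v = s ^+ 2 -> ip G v ka = 0 -> ip G v kb = 0 ->
  ip G a kb - ip G ka b - bil S a b =
  ip G (perp G v a) (kb - Omtilde G Om (s^-1 *: v) b)
  - ip G (ka - Omtilde G Om (s^-1 *: v) a) (perp G v b).
Proof.
move=> hG hS hb s0 hvv hka hkb.
rewrite hb /Omtilde /perp.
rewrite !(ipDl, ipDr, ipZl, ipZr, ipNl, ipNr, lorD, lorZ, lorN).
rewrite !(ipskew hG hS hb) !(ipself hG hS hb) hvv.
have e1 x : ip G (lorentz Om x) v = - ip G (lorentz Om v) x.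
  by rewrite (ipC hG) (ipskew hG hS hb).
rewrite !e1 hkb (ipC hG ka v) hka (ipC hG v b).
have sn : s != 0 by rewrite gt_eqF.
field; exact: sn.
Qed.
Lemma ip0r (R : realFieldType) (n : nat) (G : 'M[R]_n) a : ip G a 0 = 0.
Proof. by rewrite -(scale0r (0 : 'rV[R]_n)) ipZr mul0r. Qed.
Lemma ip0l (R : realFieldType) (n : nat) (G : 'M[R]_n) a : ip G 0 a = 0.
Proof. by rewrite -(scale0r (0 : 'rV[R]_n)) ipZl mul0r. Qed.
Lemma pd0 (R : realFieldType) (n : nat) (G : 'M[R]_n) :
  (forall a : 'rV[R]_n, a != 0 -> 0 < ip G a a) -> forall a, ip G a a = 0 -> a = 0.
Proof.
move=> hpd a h; apply/eqP; apply: contraT => /hpd; by rewrite h ltxx.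
Qed.

Theorem lemma4p1 (R : realFieldType) (n : nat) (G S Om : 'M[R]_n)
  (W : lmodType R) (pi K : {linear W -> 'rV[R]_n}) (s : R) (v : 'rV[R]_n) (X : W) :
  G^T = G ->
  (forall a : 'rV[R]_n, a != 0 -> 0 < ip G a a) ->
  S^T = - S ->
  (forall a b : 'rV[R]_n, bil S a b = ip G a (lorentz Om b)) ->
  (forall a b : 'rV[R]_n, exists! xi : W, pi xi = a /\ K xi = b) ->
  0 < s -> ip G v v = s ^+ 2 ->
  pi X = v -> K X = lorentz Om v ->
  let TSigma := fun xi : W => ip G v (K xi) = 0 in
  (forall xi eta : W, TSigma xi -> TSigma eta ->
     omega_sig G S pi K xi eta =
       ip G (perp G v (pi xi)) (Ksig G Om pi K s v eta)
     - ip G (Ksig G Om pi K s v xi) (perp G v (pi eta))) /\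
  TSigma X /\ X != 0 /\
  (forall xi : W, TSigma xi ->
     ((forall eta : W, TSigma eta -> omega_sig G S pi K xi eta = 0) <->
      exists c : R, xi = c *: X)).
Proof.
move=> hG hpd hS hb hu s0 hvv hX hKX TSigma.
have sn : s != 0 by rewrite gt_eqF.
have s2n : s ^+ 2 != 0 by rewrite expf_neq0.
have v0 : v != 0.
  by apply/eqP => v0; move: hvv; rewrite v0 ip0l => /esym/eqP; rewrite (negbTE s2n).
split.
  move=> xi eta hx he; rewrite /omega_sig /Ksig; exact: part1.
split.
  by rewrite /TSigma hKX (ipskew hG hS hb) (ipself hG hS hb) oppr0.
split.
  by apply/eqP => X0; move: hX; rewrite X0 linear0 => v0'; rewrite -v0' eqxx in v0.
move=> xi hxi; split.
- move=> H.
  have hOm : K xi = lorentz Om (pi xi).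
    have hw : forall w, ip G (lorentz Om (pi xi) - K xi) w = 0.
      move=> w; have [eta [[pe ke] _]] := hu w 0.
      have := H eta; rewrite /TSigma ke ip0r => /(_ erefl).
      rewrite /omega_sig ke pe ip0r hb (ipskew hG hS hb) ipDl ipNl => <-.
      by rewrite sub0r opprK addrC.
    by apply/eqP; rewrite eq_sym -subr_eq0; apply/eqP; apply: (@pd0 _ _ G hpd); apply: hw.
  set c := ip G (pi xi) v / s ^+ 2.
  have hpi : pi xi = c *: v.
    set z := pi xi - c *: v.
    have hz : ip G v z = 0.
      by rewrite /z ipDr ipNr ipZr hvv (ipC hG) /c divfK // subrr.
    have [eta [[pe ke] _]] := hu 0 z.
    have := H eta; rewrite /TSigma ke => /(_ hz).
    rewrite /omega_sig ke pe ip0r hb /lorentz mul0mx ip0r !subr0 => haz.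
    have : ip G z z = 0.
      by rewrite {1}/z ipDl ipNl ipZl haz hz mulr0 subrr.
    by move/(@pd0 _ _ G hpd)/eqP; rewrite subr_eq0 => /eqP.
  exists c.
  have [x [_ uq]] := hu (c *: v) (c *: lorentz Om v).
  rewrite -(uq xi); last by rewrite hOm hpi lorZ.
  by apply: uq; rewrite !linearZ /= hX hKX.
- move=> [c ->] eta he.
  rewrite /omega_sig !linearZ /= hX hKX hb !ipZl he (ipskew hG hS hb v).
  by rewrite mulr0 sub0r mulrN opprK addrC subrr.
Qed.
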